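(* Let $n\ge1$, identify $\mathbb{R}^{n+1}=\mathbb{R}^n\times\mathbb{R}$, let $I$ be a finite nonempty index set and $f_i\colon\mathbb{R}^n\to(0,\infty)$ ($i\in I$) continuous functions with epigraphs $L_i=\{(x,y)\mid f_i(x)\le y\}$. Let $K\subset\mathbb{R}^{n+1}$ be a nonempty closed set containing a point whose last coordinate is $\le 0$, with $K\cap L_i=\emptyset$ for all $i\in I$. Let $f_{\min}(x)=\min\{f_i(x)\mid i\in I\}$, with epigraph $L=\bigcup_{i\in I}L_i$. Let $G_i^\pm$ be the upper/lower equidistant functions associated with $K$ and $L_i$, and $G_{\min}^\pm$ those associated with $K$ and $L$. Then for every $x\in\mathbb{R}^n$, $$\min\{G_i^-(x)\mid i\in I\}\le G_{\min}^-(x)\le G_{\min}^+(x)\le\min\{G_i^+(x)\mid i\in I\}.$$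
   Context: $d(p,A)=\inf\{|p-q|\mid q\in A\}$ (Euclidean distance). For a closed set $K$ and epigraph $M$ of a positive continuous function with $K\cap M=\emptyset$, the upper and lower equidistant functions are $G^+(x)=\sup\{y\mid d((x,y),K)=d((x,y),M)\}$ and $G^-(x)=\inf\{y\mid d((x,y),K)=d((x,y),M)\}$ (these are real numbers under the stated assumptions). *)

(* Defs.v *)
From HB Require Import structures.
From mathcomp Require Import all_boot all_order all_algebra.
From mathcomp Require Import all_classical all_reals all_analysis.
Set Implicit Arguments. Unset Strict Implicit. Unset Printing Implicit Defensive.
Import Order.TTheory GRing.Theory Num.Theory.
Import numFieldNormedType.Exports.
Local Open Scope classical_set_scope.
Local Open Scope ring_scope.

Section Defs.
Variables (R : realType) (n : nat).

Definition edist (p q : 'rV[R]_n * R) : R :=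
  Num.sqrt (\sum_(i < n) (p.1 ord0 i - q.1 ord0 i) ^+ 2 + (p.2 - q.2) ^+ 2).

Definition distS (p : 'rV[R]_n * R) (A : set ('rV[R]_n * R)) : R :=
  inf [set edist p q | q in A].

Definition epi (f : 'rV[R]_n -> R) : set ('rV[R]_n * R) :=
  [set p | f p.1 <= p.2].

Definition Gplus (K M : set ('rV[R]_n * R)) (x : 'rV[R]_n) : R :=
  sup [set y | distS (x, y) K = distS (x, y) M].

Definition Gminus (K M : set ('rV[R]_n * R)) (x : 'rV[R]_n) : R :=
  inf [set y | distS (x, y) K = distS (x, y) M].

End Defs.

(* minimum of F over a finite index type I, nonempty as witnessed by i0 *)
Definition fmin (R : realType) (I : finType) (i0 : I) (F : I -> R) : R :=
  \big[Order.min/F i0]_(i : I) F i.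

(* Main.v *)
Require Import Defs.
From HB Require Import structures.
From mathcomp Require Import all_boot all_order all_algebra.
From mathcomp Require Import all_classical all_reals all_analysis.
From mathcomp Require Import lra ring.
Import Order.TTheory GRing.Theory Num.Theory.
Import numFieldNormedType.Exports.
Local Open Scope classical_set_scope.
Local Open Scope ring_scope.
Set Implicit Arguments. Unset Strict Implicit.

Lemma fmin_arg (R : realType) (I : finType) (i0 : I) (F : I -> R) :
  exists j, fmin i0 F = F j.
Proof.
rewrite /fmin; elim/big_ind: _ => [|a b [j ->] [k ->]|i _]; last by exists i.
- by exists i0.
- by rewrite /Order.min; case: ifP => _; [exists j|exists k].
Qed.

Lemma fmin_le (R : realType) (I : finType) (i0 : I) (F : I -> R) j :
  fmin i0 F <= F j.
Proof. exact: bigmin_le. Qed.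

Lemma le_fmin (R : realType) (I : finType) (i0 : I) (F : I -> R) c :
  (forall j, c <= F j) -> c <= fmin i0 F.
Proof. by move=> h; apply: le_bigmin. Qed.

Section basics.
Variables (R : realType) (n : nat).
Implicit Types (p q : 'rV[R]_n * R) (A : set ('rV[R]_n * R)).

Lemma edist_ge0 p q : 0 <= Defs.edist p q.
Proof. exact: sqrtr_ge0. Qed.

Lemma sum_ge0' (x z : 'rV[R]_n) : 0 <= \sum_(i < n) (x ord0 i - z ord0 i) ^+ 2.
Proof. by apply: sumr_ge0 => i _; apply: sqr_ge0. Qed.

Lemma distS_le p A q : A q -> distS p A <= Defs.edist p q.
Proof.
move=> Aq; apply: ge_inf; last by exists q.
by exists 0 => _ [r _ <-]; exact: edist_ge0.
Qed.

Lemma distS_ge p A c : A !=set0 -> (forall q, A q -> c <= Defs.edist p q) ->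
  c <= distS p A.
Proof.
move=> [q Aq] h; apply: lb_le_inf; first by exists (Defs.edist p q), q.
by move=> _ [r Ar <-]; exact: h.
Qed.

Lemma distS_ge0 p A : A !=set0 -> 0 <= distS p A.
Proof. by move=> A0; apply: distS_ge => // q _; exact: edist_ge0. Qed.

Lemma sqrt_vert (s u v : R) : 0 <= s ->
  Num.sqrt (s + u ^+ 2) <= Num.sqrt (s + v ^+ 2) + `|u - v|.
Proof.
move=> s0; set T := Num.sqrt (s + v ^+ 2).
have T0 : 0 <= T by exact: sqrtr_ge0.
have TT : T ^+ 2 = s + v ^+ 2 by rewrite sqr_sqrtr // addr_ge0 // sqr_ge0.
have vT : `|v| <= T.
  by rewrite -sqrtr_sqr ler_sqrt ?addr_ge0 ?sqr_ge0 // lerDr.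
have d0 : 0 <= `|u - v| by [].
rewrite -[X in _ <= X](ger0_norm (addr_ge0 T0 d0)) -sqrtr_sqr.
rewrite ler_sqrt ?sqr_ge0 //.
have h1 : v * (u - v) <= `|v| * `|u - v|.
  by rewrite -normrM real_ler_norm ?num_real.
have h2 : `|v| * `|u - v| <= T * `|u - v| by rewrite ler_wpM2r.
have e : (u - v) ^+ 2 = `|u - v| ^+ 2 by rewrite real_normK ?num_real.
rewrite sqrrD TT; nra.
Qed.

Lemma edist_vert (x : 'rV[R]_n) y y' q :
  Defs.edist (x, y) q <= Defs.edist (x, y') q + `|y - y'|.
Proof.
rewrite /Defs.edist /=.
have -> : y - y' = (y - q.2) - (y' - q.2) by rewrite opprB addrA subrK.
apply: sqrt_vert; exact: sum_ge0'.
Qed.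

Lemma distS_vert (x : 'rV[R]_n) y y' A : A !=set0 ->
  distS (x, y) A <= distS (x, y') A + `|y - y'|.
Proof.
move=> A0; rewrite -lerBlDr; apply: distS_ge => // q Aq.
rewrite lerBlDr; apply: le_trans (edist_vert x y y' q).
exact: distS_le.
Qed.

Lemma distS_lip (x : 'rV[R]_n) y y' A : A !=set0 ->
  `|distS (x, y) A - distS (x, y') A| <= `|y - y'|.
Proof.
move=> A0; rewrite ler_norml; apply/andP; split.
  by have := distS_vert x y' y A0; rewrite distrC; lra.
by have := distS_vert x y y' A0; lra.
Qed.

End basics.

Lemma lip_cont (R : realType) (g : R -> R) :
  (forall y t, `|g y - g t| <= 2 * `|y - t|) -> continuous g.
Proof.
move=> h y; apply/cvgrPdist_lt => e e0; apply/nbhs_ballP.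
exists (e / 2); first by apply: divr_gt0.
move=> t; rewrite /ball /= => yt.
apply: le_lt_trans (h y t) _.
by rewrite -ltr_pdivlMl // mulrC.
Qed.

Section geom.
Variables (R : realType) (n : nat).
Implicit Types (p q : 'rV[R]_n * R) (A : set ('rV[R]_n * R)).

Lemma term_le_sum (x z : 'rV[R]_n) j :
  (x ord0 j - z ord0 j) ^+ 2 <= \sum_(i < n) (x ord0 i - z ord0 i) ^+ 2.
Proof.
rewrite (bigD1 j) //= lerDl; by apply: sumr_ge0 => i _; apply: sqr_ge0.
Qed.

Lemma edist_ge2 p q : `|p.2 - q.2| <= Defs.edist p q.
Proof.
rewrite /Defs.edist -sqrtr_sqr ler_sqrt; last by rewrite addr_ge0 ?sqr_ge0 ?sum_ge0'.
by rewrite lerDr sum_ge0'.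
Qed.

Lemma edist_ge1 p q j : `|p.1 ord0 j - q.1 ord0 j| <= Defs.edist p q.
Proof.
rewrite /Defs.edist -sqrtr_sqr ler_sqrt; last by rewrite addr_ge0 ?sqr_ge0 ?sum_ge0'.
apply: le_trans (term_le_sum _ _ j) _; rewrite lerDl; exact: sqr_ge0.
Qed.

Lemma distS_pos p K : closed K -> K !=set0 -> ~ K p -> 0 < distS p K.
Proof.
move=> cK K0 Kp.
have /nbhs_ballP [e e0 he] : nbhs p (~` K).
  by apply: open_nbhs_nbhs; split => //; exact: closed_openC.
apply: lt_le_trans e0 _; apply: distS_ge => // q Kq.
rewrite leNgt; apply/negP => lt; apply: (he q) => //.
rewrite /ball /= /prod_ball /=; split; last first.
  by rewrite /ball /=; apply: le_lt_trans lt; exact: edist_ge2.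
split; [by have := le_lt_trans (edist_ge0 p q) lt | move=> i j]; rewrite [i]ord1 /ball /=.
by apply: le_lt_trans lt; exact: edist_ge1.
Qed.

Lemma norm_le_sum (x z : 'rV[R]_n) a : 0 <= a ->
  \sum_(i < n) (x ord0 i - z ord0 i) ^+ 2 <= a -> `|x - z| <= Num.sqrt a.
Proof.
move=> a0 h; rewrite [leLHS]/Num.norm /= mx_normrE; apply: bigmax_le => //.
move=> [i j] _ /=; rewrite [i]ord1 !mxE -sqrtr_sqr ler_sqrt //.
exact: le_trans (term_le_sum _ _ j) h.
Qed.

Lemma pos_lb (f : 'rV[R]_n -> R) (x : 'rV[R]_n) (r : R) : 0 <= r ->
  continuous f -> (forall z, 0 < f z) ->
  exists2 m, 0 < m & forall z, `|x - z| <= r -> m <= f z.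
Proof.
move=> r0 cf fp.
pose C := closed_ball_ Num.norm x r.
have bC : [bounded z | z in C].
  rewrite /bounded_near; near=> M => z; rewrite /C /closed_ball_ /= => h.
  have : `|z| <= `|x| + r.
    have -> : z = x - (x - z) by rewrite opprB addrC subrK.
    by apply: le_trans (ler_normB _ _) _; rewrite lerD2l.
  move=> hz; apply: le_trans hz _; near: M; apply: nbhs_pinfty_ge; exact: num_real.
have cC : compact C by apply: bounded_closed_compact => //; exact: closed_closed_ball_.
have C0 : C !=set0 by exists x; rewrite /C /closed_ball_ /= subrr normr0.
have [c Cc minf] := EVT_min_rV C0 cC (continuous_subspaceT cf).
exists (f c); first exact: fp.
by move=> z hz; apply: minf; rewrite inE.
Unshelve. all: by end_near.
Qed.

End geom.

Section main.
Variables (R : realType) (n : nat) (I : finType) (i0 : I)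
  (f : I -> 'rV[R]_n -> R) (K : set ('rV[R]_n * R)).
Hypotheses (fc : forall i, continuous (f i)) (fpos : forall i x, 0 < f i x)
  (K0 : K !=set0) (cK : closed K) (Kneg : exists p, K p /\ p.2 <= 0)
  (disj : forall i, K `&` epi (f i) = set0).
Let fm := fun x => fmin i0 (fun i => f i x).
Variable x : 'rV[R]_n.

Let a y := distS (x, y) K.
Let b i y := distS (x, y) (epi (f i)).
Let bm y := distS (x, y) (epi fm).

Lemma epi_ne i : epi (f i) !=set0.
Proof. by exists (x, f i x); rewrite /epi /=. Qed.

Lemma epim_ne : epi fm !=set0.
Proof. by exists (x, fm x); rewrite /epi /=. Qed.

Lemma notK i (p : 'rV[R]_n * R) : epi (f i) p -> ~ K p.
Proof.
move=> Ep Kp; have : (K `&` epi (f i)) p by split.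
by rewrite disj.
Qed.

Lemma edist_self (p : 'rV[R]_n * R) : Defs.edist p p = 0.
Proof.
rewrite /Defs.edist subrr expr0n /= addr0 big1 ?sqrtr0 // => i _.
by rewrite subrr expr0n.
Qed.

Lemma distS0 (A : set ('rV[R]_n * R)) p : A p -> distS p A = 0.
Proof.
move=> Ap; apply/eqP; rewrite eq_le distS_ge0; last by exists p.
by rewrite andbT -(edist_self p); apply: distS_le.
Qed.

Lemma bm_le i y : bm y <= b i y.
Proof.
apply: distS_ge; first exact: epi_ne.
move=> q Eq; apply: distS_le; rewrite /epi /= /fm.
by apply: le_trans Eq; exact: fmin_le.
Qed.

Lemma bm_eq y : exists j, bm y = b j y.
Proof.
have [j hj] := fmin_arg i0 (fun i => b i y).
exists j; apply/eqP; rewrite eq_le bm_le /= -hj.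
apply: distS_ge; first exact: epim_ne.
move=> q; rewrite /epi /= /fm.
have [k ->] := fmin_arg i0 (fun i => f i q.1) => Eq.
apply: le_trans (fmin_le _ _ k) _; exact: distS_le.
Qed.

Lemma a_pos_i i y : f i x <= y -> 0 < a y.
Proof.
move=> h; apply: distS_pos => //; apply: (@notK i); exact: h.
Qed.

Lemma b_zero i y : f i x <= y -> b i y = 0.
Proof. by move=> h; apply: distS0. Qed.

Lemma bm_zero y : fm x <= y -> bm y = 0.
Proof. by move=> h; apply: distS0. Qed.

Lemma a_pos_m y : fm x <= y -> 0 < a y.
Proof.
have [j hj] := fmin_arg i0 (fun i => f i x).
by rewrite /fm hj; exact: a_pos_i.
Qed.

Lemma lower : exists Y, Y <= 0 /\ forall y i, y <= Y -> a y < b i y.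
Proof.
have [p [Kp p2]] := Kneg.
pose A2 := \sum_(k < n) (x ord0 k - p.1 ord0 k) ^+ 2.
have A20 : 0 <= A2 by exact: sum_ge0'.
have hm : forall i, exists2 m, 0 < m & forall z, `|x - z| <= Num.sqrt (A2 + 1) -> m <= f i z.
  by move=> i; apply: pos_lb => //; exact: sqrtr_ge0.
pose m i := projT1 (cid2 (hm i)).
have mpos i : 0 < m i by rewrite /m; case: cid2.
have mlb i z : `|x - z| <= Num.sqrt (A2 + 1) -> m i <= f i z.
  by rewrite /m; case: cid2 => ? ? H; exact: H.
pose mm := fmin i0 m.
have mm0 : 0 < mm by rewrite /mm; have [j ->] := fmin_arg i0 m.
pose Y := Order.min p.2 (- (A2 + 1) / (2 * mm)).
exists Y; split; first by rewrite ge_min p2.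
move=> y i yY.
have yp : y <= p.2 by apply: le_trans yY _; rewrite ge_min lexx.
have y2 : 2 * mm * y <= - (A2 + 1).
  have : y <= - (A2 + 1) / (2 * mm) by apply: le_trans yY _; rewrite ge_min lexx orbT.
  rewrite ler_pdivlMr ?mulr_gt0 // mulrC //.
have y0 : y <= 0 by apply: le_trans yp p2.
have ha : a y <= Num.sqrt (A2 + y ^+ 2).
  apply: le_trans (distS_le _ Kp) _; rewrite /Defs.edist /= ler_sqrt; last by rewrite addr_ge0 ?sqr_ge0.
  rewrite lerD2l; nra.
have hb : Num.sqrt (A2 + 1 + y ^+ 2) <= b i y.
  apply: distS_ge; first exact: epi_ne.
  move=> [z w] /= Ew; rewrite /Defs.edist /= ler_sqrt; last by rewrite addr_ge0 ?sqr_ge0 ?sum_ge0'.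
  have w0 : 0 < w by apply: lt_le_trans Ew.
  set s := \sum_(_ < _) _.
  have s0 : 0 <= s by exact: sum_ge0'.
  have [sA|sA] := leP (A2 + 1) s.
    nra.
  have : mm <= w.
    apply: le_trans (fmin_le _ _ i) _; apply: le_trans Ew.
    apply: mlb; apply: norm_le_sum => //; [lra | exact: ltW].
  move=> mw; nra.
apply: le_lt_trans ha _; apply: lt_le_trans hb.
rewrite ltr_sqrt; [lra|].
by rewrite addr_gt0 ?ltr01 ?addr_ge0 ?sqr_ge0 //; nra.
Qed.


Lemma cont_h (B : set ('rV[R]_n * R)) : B !=set0 ->
  continuous (fun y => a y - distS (x, y) B).
Proof.
move=> B0; apply: lip_cont => y t.
have h1 := distS_lip x y t K0; have h2 := distS_lip x y t B0.
have -> : a y - distS (x, y) B - (a t - distS (x, t) B) =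
  (a y - a t) - (distS (x, y) B - distS (x, t) B).
  by rewrite /a; ring.
apply: le_trans (ler_normB _ _) _; rewrite /a; lra.
Qed.

Lemma zero_between (B : set ('rV[R]_n * R)) y1 y2 : B !=set0 -> y1 <= y2 ->
  a y1 <= distS (x, y1) B -> distS (x, y2) B <= a y2 ->
  exists2 c, y1 <= c <= y2 & a c = distS (x, c) B.
Proof.
move=> B0 y12 h1 h2.
have := IVT (v := 0) y12 (continuous_subspaceT (cont_h B0)).
case.
  apply/andP; split.
    by rewrite ge_min; apply/orP; left; rewrite subr_le0.
  by rewrite le_max; apply/orP; right; rewrite subr_ge0.
move=> c; rewrite in_itv /= => hc /eqP; rewrite subr_eq0 => /eqP hc2.
by exists c.
Qed.

Lemma main_res :
    fmin i0 (fun i => Gminus K (epi (f i)) x) <= Gminus K (epi fm) x /\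
    Gminus K (epi fm) x <= Gplus K (epi fm) x /\
    Gplus K (epi fm) x <= fmin i0 (fun i => Gplus K (epi (f i)) x).
Proof.
have [Y [Y0 hY]] := lower.
pose S i := [set y | a y = b i y].
pose Sm := [set y | a y = bm y].
have -> : Gminus K (epi fm) x = inf Sm by [].
have -> : Gplus K (epi fm) x = sup Sm by [].
have -> : (fun i => Gminus K (epi (f i)) x) = fun i => inf (S i) by [].
have -> : (fun i => Gplus K (epi (f i)) x) = fun i => sup (S i) by [].
have S_ne i : S i !=set0.
  have [|||c _ hc] := @zero_between (epi (f i)) Y (f i x) (epi_ne i).
  - by apply: le_trans Y0 _; apply: ltW.
  - by apply: ltW; exact: hY.
  - by have := b_zero (lexx (f i x)); rewrite /b => ->; apply: ltW; exact: a_pos_i (lexx _).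
  by exists c.
have S_lb i : has_lbound (S i).
  exists Y => y; rewrite /S /= => hy; rewrite leNgt; apply/negP => yY.
  by have := hY y i (ltW yY); rewrite hy ltxx.
have S_ub i : has_ubound (S i).
  exists (f i x) => y; rewrite /S /= => hy; rewrite leNgt; apply/negP => yY.
  by have := a_pos_i (ltW yY); rewrite hy b_zero ?ltxx // ltW.
have Sm_ne : Sm !=set0.
  have [|||c _ hc] := @zero_between (epi fm) Y (fm x) epim_ne.
  - rewrite /fm; have [j ->] := fmin_arg i0 (fun i => f i x).
    by apply: le_trans Y0 _; apply: ltW.
  - have [j] := bm_eq Y; rewrite /bm => ->; by apply: ltW; exact: hY.
  - by have := bm_zero (lexx (fm x)); rewrite /bm => ->; apply: ltW; exact: a_pos_m (lexx _).
  by exists c.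
have Sm_lb : has_lbound Sm.
  exists Y => y; rewrite /Sm /= => hy; rewrite leNgt; apply/negP => yY.
  have [j hj] := bm_eq y.
  by have := hY y j (ltW yY); rewrite hy hj ltxx.
have Sm_ub : has_ubound Sm.
  exists (fm x) => y; rewrite /Sm /= => hy; rewrite leNgt; apply/negP => yY.
  by have := a_pos_m (ltW yY); rewrite hy bm_zero ?ltxx // ltW.
split.
  apply: lb_le_inf => // y Sy.
  have [j hj] := bm_eq y.
  apply: le_trans (fmin_le _ _ j) _.
  by apply: ge_inf => //; rewrite /S /=; rewrite -hj.
split.
  have [y Sy] := Sm_ne.
  by apply: le_trans (ge_inf Sm_lb Sy) (ub_le_sup Sm_ub Sy).
apply: le_fmin => i.
apply: ge_sup => // y Sy.
have h1 : a y <= b i y by rewrite Sy; exact: bm_le.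
have [|||c /andP [yc _] hc] := @zero_between (epi (f i)) y (Order.max y (f i x)) (epi_ne i).
- by rewrite le_max lexx.
- exact: h1.
- have hm : f i x <= Order.max y (f i x) by rewrite le_max lexx orbT.
  by have := b_zero hm; rewrite /b => ->; apply: ltW; exact: a_pos_i hm.
by apply: le_trans yc _; apply: ub_le_sup.
Qed.

End main.

Theorem theorem2 (R : realType) (n : nat) (I : finType) (i0 : I)
    (f : I -> 'rV[R]_n -> R) (K : set ('rV[R]_n * R)) :
  (0 < n)%N ->
  (forall i, continuous (f i)) ->
  (forall i x, 0 < f i x) ->
  K !=set0 -> closed K ->
  (exists p, K p /\ p.2 <= 0) ->
  (forall i, K `&` epi (f i) = set0) ->
  let fm := fun x => fmin i0 (fun i => f i x) in
  forall x : 'rV[R]_n,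
    fmin i0 (fun i => Gminus K (epi (f i)) x) <= Gminus K (epi fm) x /\
    Gminus K (epi fm) x <= Gplus K (epi fm) x /\
    Gplus K (epi fm) x <= fmin i0 (fun i => Gplus K (epi (f i)) x).
Proof.
move=> _ fc fp K0 cK Kn dj fm x.
exact: (main_res i0 fc fp K0 cK Kn dj x).
Qed.
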